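(* Let ${\bf F}=(F_1,F_2,F_3)$ be a triple of flags in $\mathcal F(\mathbb C^d)$ in general position satisfying property-$\star$, and let $\mathrm{Stab}(F_1,F_2)\subset\mathrm{SL}_d(\mathbb C)$ be the stabilizer of the ordered pair $(F_1,F_2)$. For $B\in\mathrm{Stab}(F_1,F_2)$ and $i\in\{1,\dots,d\}$ let $\mu_i(B)$ be the eigenvalue of $B$ on the line $F_2^i\cap F_1^{d-i+1}$. Then: (1) a sequence $(B_n)$ in $\mathrm{Stab}(F_1,F_2)$ satisfies $B_n^{-1}\cdot F_3\to F_1$ if and only if $\max_{1\le i\le d-1}|\mu_{i+1}(B_n)/\mu_i(B_n)|\to0$; (2) there is $C>0$ such that for every sequence $(B_n)$ in $\mathrm{Stab}(F_1,F_2)$ with $B_n^{-1}\cdot F_3\to F_1$, for all sufficiently large $n$, \[C^{-1}\max_{i}\Big|\frac{\mu_{i+1}(B_n)}{\mu_i(B_n)}\Big|\le d_{\mathcal F}(B_n^{-1}\cdot F_3,F_1)\le C\max_i\Big|\frac{\mu_{i+1}(B_n)}{\mu_i(B_n)}\Big|.\]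
   Context: $\mathcal F(\mathbb C^d)$ is the space of complete flags with a fixed Riemannian distance $d_{\mathcal F}$. Flags $F,G$ are transverse if $F^j+G^{d-j}=\mathbb C^d$ for all $j$; $F_1,F_2,F_3$ are in general position if $F_1^{k_1}+F_2^{k_2}+F_3^{k_3}=\mathbb C^d$ for all positive integers $k_i$ summing to $d$. A triple $(F_1,F_2,F_3)$ satisfies property-$\star$ if (1) $F_1,F_2$ and $F_2,F_3$ are transverse pairs, and (2) with $L_i=F_2^i\cap F_1^{d-i+1}$ and $\pi_i:\mathbb C^d\to L_i$ the projection with kernel $\bigoplus_{j\ne i}L_j$, for every $i\in\{1,\dots,d-1\}$ the restriction of $\pi_i$ to the line $F_2^{i+1}\cap F_3^{d-i}$ is an isomorphism onto $L_i$. *)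

(* Defs.v *)
From HB Require Import structures.
From mathcomp Require Import all_boot all_order all_algebra.
From mathcomp Require Import complex.
From mathcomp Require Import all_classical all_reals all_analysis.

Set Implicit Arguments.
Unset Strict Implicit.
Unset Printing Implicit Defensive.

Import Order.TTheory GRing.Theory Num.Theory.
Local Open Scope ring_scope.

Section Flags.
Variables (R : realType) (d : nat).
Local Notation C := R[i].

(* Conventions:
   - C^d is the space of row vectors 'rV[C]_d; a linear subspace U of C^d is
     represented by a d x d matrix whose row space is U (mxalgebra, %MS).
   - a matrix g acts on C^d by x |-> g x (column-vector convention), i.e. on
     row vectors by x |-> x *m g^T; hence g . U is the row space of U *m g^T. *)
Definition act (g : 'M[C]_d) (U : 'M[C]_d) : 'M[C]_d := U *m g^T.

Definition flag := nat -> 'M[C]_d.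

Definition is_flag (F : flag) : Prop :=
  (forall j, (j <= d)%N -> \rank (F j) = j) /\
  (forall j, (j < d)%N -> (F j <= F j.+1)%MS).

Definition act_flag (g : 'M[C]_d) (F : flag) : flag := fun j => act g (F j).

Definition transverse (F G : flag) : Prop :=
  forall j, (j <= d)%N -> row_full (F j + G (d - j)%N)%MS.

Definition general_position (F1 F2 F3 : flag) : Prop :=
  forall k1 k2 k3, (0 < k1)%N -> (0 < k2)%N -> (0 < k3)%N ->
    (k1 + k2 + k3 = d)%N -> row_full (F1 k1 + F2 k2 + F3 k3)%MS.

Definition Lline (F1 F2 : flag) (i : nat) : 'M[C]_d :=
  (F2 i :&: F1 (d - i)%N.+1)%MS.

Definition Lproj (F1 F2 : flag) (i : nat) : 'M[C]_d :=
  proj_mx (Lline F1 F2 i) (\sum_(1 <= j < d.+1 | j != i) Lline F1 F2 j)%MS.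

Definition property_star (F1 F2 F3 : flag) : Prop :=
  transverse F1 F2 /\ transverse F2 F3 /\
  forall i, (1 <= i < d)%N ->
    let M := (F2 i.+1 :&: F3 (d - i)%N)%MS in
    (* the restriction of pi_i to the line M is an isomorphism onto L_i:
       its image is L_i and it is injective on M *)
    (M *m Lproj F1 F2 i == Lline F1 F2 i)%MS /\
    \rank (M *m Lproj F1 F2 i) = \rank M.

Definition in_Stab (F1 F2 : flag) (B : 'M[C]_d) : Prop :=
  \det B = 1 /\
  forall j, (j <= d)%N ->
    (act B (F1 j) == F1 j)%MS /\ (act B (F2 j) == F2 j)%MS.

Definition eigval_on (B : 'M[C]_d) (L : 'M[C]_d) (mu : C) : Prop :=
  forall v : 'rV[C]_d, (v <= L)%MS -> v *m B^T = mu *: v.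

Definition ctrmx m n (A : 'M[C]_(m, n)) : 'M[C]_(n, m) := (map_mx conjc A)^T.

Definition oproj (U : 'M[C]_d) : 'M[C]_d :=
  let A := row_base U in ctrmx A *m invmx (A *m ctrmx A) *m A.

Definition cabs (z : C) : R := @ComplexField.Normc.normc R z.

Definition frob (A : 'M[C]_d) : R :=
  Num.sqrt (\sum_(a < d) \sum_(b < d) cabs (A a b) ^+ 2).

Definition distF (F G : flag) : R :=
  \sum_(j < d.+1) frob (oproj (F j) - oproj (G j)).

Definition max_ratio (mu : nat -> C) : R :=
  \big[Num.max/0]_(1 <= i < d) cabs (mu i.+1 / mu i).

End Flags.

(* Main.v *)
Require Import Defs.
From HB Require Import structures.
From mathcomp Require Import all_boot all_order all_algebra.
From mathcomp Require Import complex.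
From mathcomp Require Import all_classical all_reals all_analysis.
From mathcomp Require Import ring lra zify.
Import Order.TTheory GRing.Theory Num.Theory.
Import numFieldNormedType.Exports.
Set Implicit Arguments.
Unset Strict Implicit.
Unset Printing Implicit Defensive.
Local Open Scope ring_scope.

Section Norms.
Variable R : realType.
Local Notation C := R[i].

Lemma cabs_ge0 (z : C) : 0 <= cabs z.
Proof. by case: z => a b; rewrite /cabs /= sqrtr_ge0. Qed.

Lemma cabs0 : cabs (0 : C) = 0.
Proof. exact: ComplexField.Normc.normc0. Qed.

Lemma cabsD (x y : C) : cabs (x + y) <= cabs x + cabs y.
Proof. exact: le_normcD. Qed.

Lemma cabsM (x y : C) : cabs (x * y) = cabs x * cabs y.
Proof. exact: ComplexField.Normc.normcM. Qed.

Lemma cabsN (x : C) : cabs (- x) = cabs x.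
Proof. exact: normcN. Qed.

Lemma cabs_eq0 (x : C) : cabs x = 0 -> x = 0.
Proof. exact: ComplexField.Normc.eq0_normc. Qed.

Lemma cabsV (x : C) : cabs (x^-1) = (cabs x)^-1.
Proof. exact: ComplexField.Normc.normcV. Qed.

Lemma cabs_conj (x : C) : cabs (conjc x) = cabs x.
Proof. by case: x => a b; rewrite /cabs /= sqrrN. Qed.

Lemma cabs1 : cabs (1 : C) = 1.
Proof. exact: ComplexField.Normc.normc1. Qed.

Lemma cabsB (x y : C) : cabs (x - y) <= cabs x + cabs y.
Proof. by rewrite -(cabsN y); apply: cabsD. Qed.

Lemma cabs_sum (I : Type) (r : seq I) (P : pred I) (F : I -> C) :
  cabs (\sum_(i <- r | P i) F i) <= \sum_(i <- r | P i) cabs (F i).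
Proof.
elim/big_rec2: _ => [|i y1 y2 _ H]; first by rewrite cabs0.
by apply: le_trans (cabsD _ _) _; rewrite lerD2l.
Qed.

Lemma cabs_natr (n : nat) : cabs (n%:R : C) = n%:R.
Proof.
by rewrite /cabs normcMn -/(cabs 1) cabs1.
Qed.

Definition n1 m n (A : 'M[C]_(m, n)) : R :=
  \sum_(i < m) \sum_(j < n) cabs (A i j).

Lemma n1_ge0 m n (A : 'M[C]_(m, n)) : 0 <= n1 A.
Proof. by apply: sumr_ge0 => i _; apply: sumr_ge0 => j _; apply: cabs_ge0. Qed.

Lemma n1D m n (A B : 'M[C]_(m, n)) : n1 (A + B) <= n1 A + n1 B.
Proof.
rewrite /n1 -big_split /=; apply: ler_sum => i _.
rewrite -big_split /=; apply: ler_sum => j _; rewrite mxE; exact: cabsD.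
Qed.

Lemma n1N m n (A : 'M[C]_(m, n)) : n1 (- A) = n1 A.
Proof. by apply: eq_bigr => i _; apply: eq_bigr => j _; rewrite mxE cabsN. Qed.

Lemma n1B m n (A B : 'M[C]_(m, n)) : n1 (A - B) <= n1 A + n1 B.
Proof. by rewrite -(n1N B); apply: n1D. Qed.

Lemma n1_0 m n : n1 (0 : 'M[C]_(m, n)) = 0.
Proof. by apply: big1 => i _; apply: big1 => j _; rewrite mxE cabs0. Qed.

Lemma sum_ge_term (I : finType) (F : I -> R) (i : I) :
  (forall j, 0 <= F j) -> F i <= \sum_j F j.
Proof.
move=> H; rewrite (bigD1 i) //= lerDl; apply: sumr_ge0 => j _; exact: H.
Qed.

Lemma n1_row_aux m n (A : 'M[C]_(m, n)) i : \sum_j cabs (A i j) <= n1 A.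
Proof.
by rewrite /n1; apply: (@sum_ge_term _ (fun k => \sum_j cabs (A k j)) i) => k; apply: sumr_ge0 => l _; apply: cabs_ge0.
Qed.

Lemma n1_entry m n (A : 'M[C]_(m, n)) i j : cabs (A i j) <= n1 A.
Proof.
apply: (@le_trans _ _ (\sum_l cabs (A i l))).
  by apply: (@sum_ge_term _ (fun l => cabs (A i l)) j) => l; apply: cabs_ge0.
exact: n1_row_aux.
Qed.

Lemma n1_row m n (A : 'M[C]_(m, n)) i : \sum_j cabs (A i j) <= n1 A.
Proof.
by rewrite /n1; apply: (@sum_ge_term _ (fun k => \sum_j cabs (A k j)) i) => k; apply: sumr_ge0 => l _; apply: cabs_ge0.
Qed.

Lemma n1M m n p (A : 'M[C]_(m, n)) (B : 'M[C]_(n, p)) : n1 (A *m B) <= n1 A * n1 B.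
Proof.
rewrite /n1 mulr_suml; apply: ler_sum => i _.
apply: (@le_trans _ _ (\sum_(j < p) \sum_(l < n) cabs (A i l) * cabs (B l j))).
  apply: ler_sum => j _; rewrite mxE; apply: le_trans (cabs_sum _ _ _) _.
  by apply: ler_sum => l _; rewrite cabsM.
rewrite exchange_big /= mulr_suml; apply: ler_sum => l _.
rewrite -mulr_sumr; apply: ler_wpM2l; first exact: cabs_ge0.
exact: n1_row.
Qed.

Definition ctr m n (A : 'M[C]_(m, n)) := ctrmx A.

Lemma n1_ctr m n (A : 'M[C]_(m, n)) : n1 (ctrmx A) = n1 A.
Proof.
rewrite /n1 exchange_big /=; apply: eq_bigr => i _; apply: eq_bigr => j _.
by rewrite /ctrmx !mxE cabs_conj.
Qed.

Lemma n1Z m n (a : C) (A : 'M[C]_(m, n)) : n1 (a *: A) = cabs a * n1 A.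
Proof.
rewrite /n1 mulr_sumr; apply: eq_bigr => i _; rewrite mulr_sumr.
by apply: eq_bigr => j _; rewrite mxE cabsM.
Qed.

Lemma n1_1 n : n1 (1%:M : 'M[C]_n) = n%:R.
Proof.
rewrite /n1 (eq_bigr (fun _ => 1)) ?sumr_const ?card_ord //.
move=> i _; rewrite (bigD1 i) //= big1 ?addr0.
  by rewrite mxE eqxx cabs1.
by move=> j /negPf ji; rewrite mxE eq_sym ji cabs0.
Qed.

Lemma sumsq_le (I : Type) (r : seq I) (P : pred I) (F : I -> R) :
  (forall i, 0 <= F i) ->
  \sum_(i <- r | P i) F i ^+ 2 <= (\sum_(i <- r | P i) F i) ^+ 2.
Proof.
move=> H.
suff: 0 <= \sum_(i <- r | P i) F i /\
      \sum_(i <- r | P i) F i ^+ 2 <= (\sum_(i <- r | P i) F i) ^+ 2 by case.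
elim/big_rec2: _ => [|i y1 y2 _ [H1 H2]]; first by rewrite expr0n /=.
have Hi := H i; split; first exact: addr_ge0.
nra.
Qed.

Lemma frob_le_n1 d (A : 'M[C]_d) : frob A <= n1 A.
Proof.
rewrite /frob -(ger0_norm (n1_ge0 A)) -sqrtr_sqr; apply: ler_wsqrtr.
apply: (@le_trans _ _ (\sum_(i < d) (\sum_(j < d) cabs (A i j)) ^+ 2)).
  apply: ler_sum => i _; apply: sumsq_le => j; exact: cabs_ge0.
by apply: sumsq_le => i; apply: sumr_ge0 => j _; apply: cabs_ge0.
Qed.

Lemma frob_ge0 d (A : 'M[C]_d) : 0 <= frob A.
Proof. exact: sqrtr_ge0. Qed.

Lemma entry_le_frob d (A : 'M[C]_d) i j : cabs (A i j) <= frob A.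
Proof.
rewrite /frob -(ger0_norm (cabs_ge0 (A i j))) -sqrtr_sqr; apply: ler_wsqrtr.
apply: (@le_trans _ _ (\sum_l cabs (A i l) ^+ 2)).
  by apply: (@sum_ge_term _ (fun l => cabs (A i l) ^+ 2) j) => l; apply: sqr_ge0.
by apply: (@sum_ge_term _ (fun k => \sum_l cabs (A k l) ^+ 2) i) => k; apply: sumr_ge0 => l _; apply: sqr_ge0.
Qed.

Lemma n1_le_frob d (A : 'M[C]_d) : n1 A <= (d * d)%:R * frob A.
Proof.
apply: (@le_trans _ _ (\sum_(i < d) \sum_(j < d) frob A)).
  by apply: ler_sum => i _; apply: ler_sum => j _; apply: entry_le_frob.
rewrite sumr_const card_ord sumr_const card_ord.
by rewrite -mulrnA mulr_natl.
Qed.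

End Norms.

Section Proj.
Variable R : realType.
Local Notation C := R[i].

Lemma ctrmxM m n p (A : 'M[C]_(m, n)) (B : 'M[C]_(n, p)) :
  ctrmx (A *m B) = ctrmx B *m ctrmx A.
Proof. by rewrite /ctrmx map_mxM trmx_mul. Qed.

Lemma ctrmxK m n (A : 'M[C]_(m, n)) : ctrmx (ctrmx A) = A.
Proof. by apply/matrixP => i j; rewrite !mxE conjcK. Qed.

Lemma ctrmxD m n (A B : 'M[C]_(m, n)) : ctrmx (A + B) = ctrmx A + ctrmx B.
Proof. by apply/matrixP => i j; rewrite !mxE rmorphD. Qed.

Lemma ctrmxN m n (A : 'M[C]_(m, n)) : ctrmx (- A) = - ctrmx A.
Proof. by apply/matrixP => i j; rewrite !mxE rmorphN. Qed.

Lemma ctrmxB m n (A B : 'M[C]_(m, n)) : ctrmx (A - B) = ctrmx A - ctrmx B.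
Proof. by rewrite ctrmxD ctrmxN. Qed.

Lemma mulcJ (x : C) : x * conjc x = real_complex R ((complex.Re x) ^+ 2 + (complex.Im x) ^+ 2).
Proof.
case: x => a b; rewrite /=.
apply/eqP; rewrite eq_complex /=; apply/andP; split; apply/eqP; ring.
Qed.

Lemma vec_ctr_eq0 n (w : 'rV[C]_n) : w *m ctrmx w = 0 -> w = 0.
Proof.
move=> /matrixP /(_ 0 0); rewrite !mxE => H.
have H1 : \sum_j (w 0 j * conjc (w 0 j)) = 0.
  by rewrite -[RHS]H; apply: eq_bigr => j _; rewrite !mxE.
have H2 : (\sum_j ((complex.Re (w 0 j)) ^+ 2 + (complex.Im (w 0 j)) ^+ 2)) = 0.
  apply: complexI; rewrite rmorph_sum rmorph0 -[RHS]H1.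
  by apply: eq_bigr => j _; rewrite mulcJ.
have H3 := (psumr_eq0P (fun j _ => addr_ge0 (sqr_ge0 (complex.Re (w 0 j))) (sqr_ge0 (complex.Im (w 0 j)))) H2).
apply/matrixP => i j; rewrite (ord1 i) mxE.
have /eqP := H3 j isT; rewrite paddr_eq0 ?sqr_ge0 // !sqrf_eq0 => /andP [/eqP Ha /eqP Hb].
by case: (w 0 j) Ha Hb => a b /= -> ->.
Qed.

Lemma gram_unit k n (A : 'M[C]_(k, n)) : row_free A -> A *m ctrmx A \in unitmx.
Proof.
move=> fA; rewrite -row_free_unit; apply: inj_row_free => v Hv.
have : (v *m A) *m ctrmx (v *m A) = 0.
  by rewrite ctrmxM !mulmxA -(mulmxA v) Hv !mul0mx.
move/vec_ctr_eq0 => /eqP; rewrite mulmx_free_eq0 //; exact/eqP.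
Qed.

Definition fproj k n (A : 'M[C]_(k, n)) : 'M[C]_n :=
  ctrmx A *m invmx (A *m ctrmx A) *m A.

Lemma fprojA k n (A : 'M[C]_(k, n)) : row_free A -> A *m fproj A = A.
Proof.
by move=> fA; rewrite /fproj !mulmxA mulmxV ?gram_unit // mul1mx.
Qed.

Lemma fproj_ctr k n (A : 'M[C]_(k, n)) : row_free A -> fproj A *m ctrmx A = ctrmx A.
Proof.
by move=> fA; rewrite /fproj -!mulmxA mulVmx ?gram_unit // mulmx1.
Qed.

Lemma fproj_sub k n (A : 'M[C]_(k, n)) : (fproj A <= A)%MS.
Proof. exact: submxMl. Qed.

Lemma fproj_idem k n (A : 'M[C]_(k, n)) : row_free A -> fproj A *m fproj A = fproj A.
Proof. by move=> fA; rewrite {1}/fproj -mulmxA fprojA. Qed.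

Lemma fproj_uniq k n (A : 'M[C]_(k, n)) (P : 'M[C]_n) :
  row_free A -> (P <= A)%MS -> P *m ctrmx A = ctrmx A -> P = fproj A.
Proof.
move=> fA sPA HP.
have /submxP [D HD] : (P - fproj A <= A)%MS.
  by rewrite addmx_sub // eqmx_opp fproj_sub.
have : D *m (A *m ctrmx A) = 0.
  by rewrite mulmxA -HD mulmxBl HP fproj_ctr // subrr.
move/eqP; rewrite mulmx_free_eq0; last by rewrite row_free_unit gram_unit.
move/eqP => D0; move: HD; rewrite D0 mul0mx => /eqP; rewrite subr_eq0 => /eqP //.
Qed.

Lemma fproj_eqmx k1 k2 n (A : 'M[C]_(k1, n)) (B : 'M[C]_(k2, n)) :
  row_free A -> row_free B -> (A == B)%MS -> fproj A = fproj B.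
Proof.
move=> fA fB /andP [sAB sBA].
apply: esym; apply: fproj_uniq => //.
  exact: submx_trans (fproj_sub B) sBA.
have /submxP [D ->] := sAB.
by rewrite ctrmxM mulmxA fproj_ctr.
Qed.

Lemma oproj_fproj d k (U : 'M[C]_d) (A : 'M[C]_(k, d)) :
  row_free A -> (A == U)%MS -> oproj U = fproj A.
Proof.
move=> fA HA; rewrite /oproj -/(fproj (row_base U)).
apply: fproj_eqmx => //; first exact: row_base_free.
apply/eqmxP; apply: eqmx_trans (eq_row_base U) (eqmx_sym (eqmxP HA)).
Qed.

End Proj.

Section Local.
Variable R : realType.
Local Notation C := R[i].
Variables (d k : nat) (S : 'M[C]_d).
Hypothesis Su : S \in unitmx.
Hypothesis kd : (k <= d)%N.

Definition Jm : 'M[C]_(k, d) := \matrix_(r < k, j < d) ((j == (d - k + r)%N :> nat))%:R.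

Definition suppY (Y : 'M[C]_(k, d)) := forall r (j : 'I_d), (d - k <= j)%N -> Y r j = 0.

Lemma rowfree_YJ Y : suppY Y -> row_free (Y + Jm).
Proof.
move=> sY; apply: inj_row_free => v Hv; apply/rowP => r.
have jr : (d - k + r < d)%N.
  by have := ltn_ord r; rewrite -(ltn_add2l (d - k)) subnK.
have := congr1 (fun M : 'M[C]_(1, d) => M 0 (Ordinal jr)) Hv; rewrite !mxE => <-.
rewrite (bigD1 r) //= big1 ?addr0.
  by rewrite !mxE sY /= ?leq_addr // eqxx add0r mulr1.
move=> l lr; rewrite !mxE sY /= ?leq_addr // add0r.
by rewrite eqn_add2l (inj_eq val_inj) eq_sym (negPf lr) mulr0.
Qed.

Lemma rowfree_AY Y : suppY Y -> row_free ((Y + Jm) *m S).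
Proof.
move=> sY; rewrite /row_free mxrankMfree ?row_free_unit //.
exact: rowfree_YJ.
Qed.

Lemma suppY0 : suppY 0.
Proof. by move=> r j _; rewrite mxE. Qed.

Definition A0 := Jm *m S.
Definition P0 := fproj A0.
Definition G0i := invmx (A0 *m ctrmx A0).

Lemma rowfree_A0 : row_free A0.
Proof. by have := rowfree_AY suppY0; rewrite add0r. Qed.

Lemma A0P0 : A0 *m P0 = A0.
Proof. exact: fprojA rowfree_A0. Qed.

Lemma P0idem : P0 *m P0 = P0.
Proof. exact: fproj_idem rowfree_A0. Qed.

Lemma gram_inv_eq (G G0 : 'M[C]_k) : G \in unitmx -> G0 \in unitmx ->
  invmx G = invmx G0 - invmx G *m (G - G0) *m invmx G0.
Proof.
move=> uG uG0.
by rewrite mulmxBr mulmxBl mulVmx // mul1mx -mulmxA mulmxV // mulmx1 opprB addrC subrK.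
Qed.

Lemma projdiff (P Q : 'M[C]_d) :
  P - Q = P *m (1%:M - Q) - (1%:M - P) *m Q.
Proof.
rewrite mulmxBr mulmxBl mulmx1 mul1mx opprB.
by rewrite addrA subrK.
Qed.


Lemma n1M3 m n p q (A : 'M[C]_(m, n)) (B : 'M[C]_(n, p)) (D : 'M[C]_(p, q)) :
  n1 (A *m B *m D) <= n1 A * n1 B * n1 D.
Proof.
apply: le_trans (n1M _ _) _; apply: ler_wpM2r; first exact: n1_ge0.
exact: n1M.
Qed.

Lemma n1M4 m n p q s (A : 'M[C]_(m, n)) (B : 'M[C]_(n, p)) (D : 'M[C]_(p, q)) (F : 'M[C]_(q, s)) :
  n1 (A *m B *m D *m F) <= n1 A * n1 B * n1 D * n1 F.
Proof.
apply: le_trans (n1M _ _) _; apply: ler_wpM2r; first exact: n1_ge0.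
exact: n1M3.
Qed.

Lemma upper_bound : exists Cst eps : R, 0 < Cst /\ 0 < eps /\
  forall Y, suppY Y -> n1 Y <= eps ->
    n1 (fproj ((Y + Jm) *m S) - P0) <= Cst * n1 Y.
Proof.
set a := n1 S; set p := n1 A0; set g := n1 G0i; set q0 := n1 (1%:M - P0 : 'M[C]_d).
set h := n1 (G0i *m A0).
have a0 : 0 <= a by apply: n1_ge0.
have p0 : 0 <= p by apply: n1_ge0.
have g0 : 0 <= g by apply: n1_ge0.
have q00 : 0 <= q0 by apply: n1_ge0.
have h0 : 0 <= h by apply: n1_ge0.
set c1 := (2 * p + a) * a * g.
have c10 : 0 <= c1 by rewrite /c1; apply: mulr_ge0 => //; apply: mulr_ge0 => //; lra.
exists ((a + p) * (2 * g) * a * q0 + (d%:R + (a + p) * (2 * g) * (a + p)) * a * h + 1).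
exists (Num.min 1 (2 * c1 + 1)^-1).
split.
  have : 0 <= (a + p) * (2 * g) * a * q0 + (d%:R + (a + p) * (2 * g) * (a + p)) * a * h.
    by repeat (apply: mulr_ge0 || apply: addr_ge0 || apply: ler0n || done || lra).
  lra.
split; first by rewrite lt_min ltr01 invr_gt0; apply/andP; split => //; lra.
move=> Y sY; rewrite le_min => /andP [z1 zc].
set z := n1 Y.
have z0 : 0 <= z by apply: n1_ge0.
set E := Y *m S.
have hE : n1 E <= a * z by rewrite mulrC; apply: n1M.
have E0 : 0 <= n1 E by apply: n1_ge0.
have AYE : (Y + Jm) *m S = E + A0 by rewrite mulmxDl.
have fAY := rowfree_AY sY.
rewrite AYE in fAY *.
set AY := E + A0.
have uG : AY *m ctrmx AY \in unitmx := gram_unit fAY.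
have uG0 : A0 *m ctrmx A0 \in unitmx := gram_unit rowfree_A0.
set G := AY *m ctrmx AY.
set G0 := A0 *m ctrmx A0.
have hD : G - G0 = E *m ctrmx E + E *m ctrmx A0 + A0 *m ctrmx E.
  by rewrite /G /AY ctrmxD mulmxDl !mulmxDr addrA addrK.
have nD : n1 (G - G0) <= (2 * p + a) * a * z.
  rewrite hD; apply: le_trans (n1D _ _) _; apply: le_trans (lerD (n1D _ _) (lexx _)) _.
  apply: (@le_trans _ _ (n1 E * n1 E + n1 E * p + p * n1 E)).
    apply: lerD; first apply: lerD; apply: le_trans (n1M _ _) _; by rewrite ?n1_ctr.
  have hEa : n1 E <= a by apply: le_trans hE _; rewrite -{2}(mulr1 a); apply: ler_wpM2l.
  have : n1 E * n1 E <= a * (a * z) by apply: ler_pM.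
  nra.
set Gi := invmx G.
have nGi : n1 Gi <= 2 * g.
  have e := gram_inv_eq uG uG0; rewrite -/G -/G0 -/Gi -/G0i in e.
  have H1 : n1 Gi <= g + n1 Gi * n1 (G - G0) * g.
    rewrite {1}e; apply: le_trans (n1B _ _) _; rewrite lerD2l; exact: n1M3.
  have H2 : n1 (G - G0) * g <= 1 / 2.
    apply: (@le_trans _ _ (c1 * z)).
      by rewrite /c1 [_ * z]mulrAC; apply: ler_wpM2r.
    have : c1 * z <= c1 * (2 * c1 + 1)^-1 by apply: ler_wpM2l.
    suff : c1 * (2 * c1 + 1)^-1 <= 1 / 2 by lra.
    rewrite ler_pdivrMr; lra.
  have nG0 : 0 <= n1 Gi by apply: n1_ge0.
  have : n1 Gi * (n1 (G - G0) * g) <= n1 Gi * (1 / 2) by apply: ler_wpM2l.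
  rewrite mulrA; lra.
set PY := fproj AY.
have eA : AY *m (1%:M - P0) = E *m (1%:M - P0).
  by rewrite /AY mulmxDl [A0 *m _]mulmxBr A0P0 mulmx1 subrr addr0.
have e1 : PY *m (1%:M - P0) = ctrmx AY *m Gi *m E *m (1%:M - P0).
  by rewrite /PY /fproj -/G -/Gi -[RHS]mulmxA -eA !mulmxA.
have cA0 : ctrmx A0 = ctrmx AY - ctrmx E by rewrite /AY ctrmxD addrC addKr.
have e2 : (1%:M - PY) *m P0 = - ((1%:M - PY) *m ctrmx E *m (G0i *m A0)).
  rewrite {1}/P0 /fproj -/G0 -/G0i -mulmxA -mulmxA mulmxA.
  rewrite cA0 mulmxBr [X in (X - _) *m _]mulmxBl mul1mx fproj_ctr // subrr sub0r.
  by rewrite mulNmx mulmxA.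
rewrite projdiff e1 e2 opprK.
have nAY : n1 AY <= a + p.
  apply: le_trans (n1D _ _) _; rewrite lerD2r; apply: le_trans hE _.
  by rewrite -{2}(mulr1 a); apply: ler_wpM2l.
have nAY0 : 0 <= n1 AY by apply: n1_ge0.
have nGi0 : 0 <= n1 Gi by apply: n1_ge0.
have nPY : n1 (1%:M - PY) <= d%:R + (a + p) * (2 * g) * (a + p).
  apply: le_trans (n1B _ _) _; rewrite n1_1 lerD2l.
  apply: le_trans (n1M3 _ _ _) _; rewrite n1_ctr.
  apply: ler_pM; [by apply: mulr_ge0 | by [] | | by []].
  by apply: ler_pM.
apply: le_trans (n1D _ _) _.
apply: le_trans (lerD (n1M4 _ _ _ _) (n1M3 _ _ _)) _.
rewrite [n1 (ctrmx AY)]n1_ctr [n1 (ctrmx E)]n1_ctr -/h -/q0.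
have T1 : n1 AY * n1 Gi * n1 E * q0 <= (a + p) * (2 * g) * (a * z) * q0.
  apply: (ler_wpM2r q00); apply: (ler_pM (mulr_ge0 nAY0 nGi0) E0 _ hE).
  exact: (ler_pM nAY0 nGi0 nAY nGi).
have T2 : n1 (1%:M - PY) * n1 E * h <= (d%:R + (a + p) * (2 * g) * (a + p)) * (a * z) * h.
  apply: (ler_wpM2r h0); exact: (ler_pM (n1_ge0 _) E0 nPY hE).
apply: le_trans (lerD T1 T2) _.
have -> : (a + p) * (2 * g) * (a * z) * q0 + (d%:R + (a + p) * (2 * g) * (a + p)) * (a * z) * h
  = ((a + p) * (2 * g) * a * q0 + (d%:R + (a + p) * (2 * g) * (a + p)) * a * h) * z by ring.
rewrite [X in _ <= X]mulrDl mul1r lerDl //.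
Qed.

End Local.

Section Lower.
Variable R : realType.
Local Notation C := R[i].
Variables (d k : nat) (S : 'M[C]_d).
Hypothesis Su : S \in unitmx.
Hypothesis kd : (k <= d)%N.
Local Notation Jm := (@Jm R d k).
Local Notation A0 := (@A0 R d k S).
Local Notation P0 := (@P0 R d k S).
Local Notation G0i := (@G0i R d k S).

Lemma Q0idem : (1%:M - P0) *m (1%:M - P0) = 1%:M - P0.
Proof.
rewrite mulmxBl mul1mx mulmxBr mulmx1 (P0idem Su kd) subrr subr0 //.
Qed.

Lemma lower_bound : exists Cst del : R, 0 < Cst /\ 0 < del /\
  forall Y, suppY Y -> n1 (fproj ((Y + Jm) *m S) - P0) <= del ->
    n1 Y <= Cst * n1 (fproj ((Y + Jm) *m S) - P0).
Proof.
set a := n1 S; set p := n1 A0; set q0 := n1 (1%:M - P0 : 'M[C]_d).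
set si := n1 (invmx S).
have a0 : 0 <= a by apply: n1_ge0.
have p0 : 0 <= p by apply: n1_ge0.
have q00 : 0 <= q0 by apply: n1_ge0.
have si0 : 0 <= si by apply: n1_ge0.
set c := a * q0 * si.
have c0 : 0 <= c by rewrite /c; apply: mulr_ge0 => //; apply: mulr_ge0.
set b := p * q0 * si.
have b0 : 0 <= b by rewrite /b; apply: mulr_ge0 => //; apply: mulr_ge0.
exists (2 * b + 1), (2 * c + 1)^-1.
split; first lra.
split; first by rewrite invr_gt0; lra.
move=> Y sY.
set z := n1 Y.
have z0 : 0 <= z by apply: n1_ge0.
set E := Y *m S.
have hE : n1 E <= a * z by rewrite mulrC; apply: n1M.
have AYE : (Y + Jm) *m S = E + A0 by rewrite mulmxDl.
have fAY := rowfree_AY Su kd sY.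
rewrite AYE in fAY *.
set AY := E + A0.
set PY := fproj AY.
set D := PY - P0.
move=> hD.
have nD0 : 0 <= n1 D by apply: n1_ge0.
set W := E *m (1%:M - P0).
have eA : AY *m (1%:M - P0) = W.
  by rewrite /AY mulmxDl [A0 *m _]mulmxBr (A0P0 Su kd) mulmx1 subrr addr0.
have eW : AY *m D *m (1%:M - P0) = W.
  have e0 : AY *m D = AY *m (1%:M - P0) by rewrite /D !mulmxBr /PY fprojA // mulmx1.
  by rewrite e0 -mulmxA Q0idem.
have eY : forall r (j : 'I_d), (j < d - k)%N -> Y r j = (W *m invmx S) r j.
  move=> r j jlt.
  have -> : W *m invmx S = Y - (E *m ctrmx A0 *m G0i) *m Jm.
    rewrite /W mulmxBr mulmx1 mulmxBl /E mulmxK //.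
    have -> : P0 = ctrmx A0 *m G0i *m Jm *m S by rewrite /P0 /fproj /G0i /A0 !mulmxA.
    by rewrite !mulmxA mulmxK.
  rewrite !mxE big1 ?subr0 // => l _; rewrite !mxE.
  have : (j : nat) != (d - k + l)%N.
    by apply: contraTneq jlt => ->; rewrite -leqNgt leq_addr.
  by move/negPf => ->; rewrite mulr0.
have nY : z <= n1 (W *m invmx S).
  apply: ler_sum => r _; apply: ler_sum => j _.
  case: (ltnP j (d - k)) => hj; first by rewrite eY.
  by rewrite sY // cabs0 cabs_ge0.
have nW : n1 W <= n1 AY * n1 D * q0 by rewrite -eW; apply: n1M3.
have nAY : n1 AY <= a * z + p by apply: le_trans (n1D _ _) _; rewrite lerD2r.
have F1 : z <= (a * z + p) * n1 D * q0 * si.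
  apply: le_trans nY _; apply: le_trans (n1M _ _) _; rewrite -/si.
  apply: (ler_wpM2r si0); apply: le_trans nW _.
  apply: (ler_wpM2r q00); apply: (ler_wpM2r nD0); exact: nAY.
have F2 : c * n1 D <= 1 / 2.
  apply: (@le_trans _ _ (c * (2 * c + 1)^-1)); first exact: ler_wpM2l.
  rewrite ler_pdivrMr; lra.
have F1' : z <= z * (c * n1 D) + b * n1 D.
  by apply: le_trans F1 _; rewrite /c /b le_eqVlt; apply/orP; left; apply/eqP; ring.
have F3 : z * (c * n1 D) <= z * (1 / 2) by apply: ler_wpM2l.
have -> : (2 * b + 1) * n1 D = 2 * (b * n1 D) + n1 D by ring.
lra.
Qed.

End Lower.

Section FlagStruct.
Variable R : realType.
Local Notation C := R[i].
Variable d : nat.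

Lemma flag_mono (F : flag R d) : is_flag F -> forall a b, (a <= b <= d)%N -> (F a <= F b)%MS.
Proof.
move=> [_ hs] a b /andP [ab bd]; elim: b ab bd => [|b IH] ab bd.
  by rewrite leqn0 in ab; rewrite (eqP ab).
rewrite leq_eqVlt in ab; case/orP: ab => [/eqP -> //|ab].
apply: submx_trans (IH ab (ltnW bd)) (hs b bd).
Qed.

Lemma flag_rank (F : flag R d) j : is_flag F -> (j <= d)%N -> \rank (F j) = j.
Proof. by move=> [h _]; apply: h. Qed.

Lemma rank_adds_le m1 m2 n (A : 'M[C]_(m1, n)) (B : 'M[C]_(m2, n)) :
  (\rank (A + B) <= \rank A + \rank B)%N.
Proof. by rewrite -mxrank_sum_cap leq_addr. Qed.

Lemma rank_sum_le n (I : Type) (r : seq I) (P : pred I) (A : I -> 'M[C]_n) :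
  (\rank (\sum_(i <- r | P i) A i)%MS <= \sum_(i <- r | P i) \rank (A i))%N.
Proof.
elim/big_rec2: _ => [|i y1 y2 _ H]; first by rewrite mxrank0.
apply: leq_trans (rank_adds_le _ _) _; by rewrite leq_add2l.
Qed.

Variables (F1 F2 : flag R d).
Hypothesis isF1 : is_flag F1.
Hypothesis isF2 : is_flag F2.
Hypothesis tr12 : transverse F1 F2.

Lemma cap0 m : (m <= d)%N -> (F2 m :&: F1 (d - m)%N)%MS = 0.
Proof.
move=> md; apply/eqP; rewrite -mxrank_eq0.
have H := mxrank_sum_cap (F1 (d - m)%N) (F2 m).
have Hf := tr12 (ssrnat.leq_subr m d); rewrite subKn // in Hf.
move: Hf; rewrite /row_full => /eqP Hf.
rewrite Hf !flag_rank ?ssrnat.leq_subr // subnK // in H.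
rewrite capmxC; lia.
Qed.

Lemma Lrank i : (1 <= i <= d)%N -> \rank (Lline F1 F2 i) = 1%N.
Proof.
move=> /andP [i1 id]; rewrite /Lline.
have H := mxrank_sum_cap (F2 i) (F1 (d - i)%N.+1).
have d1 : ((d - i)%N.+1 <= d)%N by lia.
have full : \rank (F2 i + F1 (d - i)%N.+1)%MS = d.
  apply/eqP; rewrite eqn_leq rank_leq_col /=.
  have Hf := tr12 (ssrnat.leq_subr i d); rewrite subKn // /row_full in Hf.
  rewrite -{1}(eqP Hf); apply: mxrankS; rewrite addsmxC; apply: addsmxS => //.
  by apply: flag_mono => //; rewrite leqnSn.
rewrite full !flag_rank // in H.
lia.
Qed.

Lemma L_sub2 i : (Lline F1 F2 i <= F2 i)%MS.
Proof. exact: capmxSl. Qed.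

Lemma L_sub1 i : (Lline F1 F2 i <= F1 (d - i)%N.+1)%MS.
Proof. exact: capmxSr. Qed.

Lemma F2sum m : (m <= d)%N -> (F2 m <= \sum_(i < m) Lline F1 F2 i.+1)%MS.
Proof.
elim: m => [|m IH] md.
  by rewrite big_ord0; move: (flag_rank isF2 (leq0n d)) => /eqP; rewrite mxrank_eq0 => /eqP ->.
have IH' := IH (ltnW md).
set Sm := (\sum_(i < m) Lline F1 F2 i.+1)%MS in IH'.
have eS : (\sum_(i < m.+1) Lline F1 F2 i.+1)%MS = (Sm + Lline F1 F2 m.+1)%MS.
  by rewrite big_ord_recr.
rewrite eS.
have sub1 : (Sm <= F2 m)%MS.
  rewrite /Sm; apply/sumsmx_subP => i _.
  apply: submx_trans (L_sub2 _) _; apply: flag_mono => //.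
  by have := ltn_ord i; lia.
have eqm : (Sm == F2 m)%MS.
  by apply/andP; split.
have capz : (Sm :&: Lline F1 F2 m.+1)%MS = 0.
  apply/eqP; rewrite -submx0 -(cap0 (ltnW md)).
  apply: capmxS => //; rewrite /Lline.
  by rewrite subnSK //; apply: capmxSr.
have rk : \rank (Sm + Lline F1 F2 m.+1)%MS = m.+1.
  have H := mxrank_sum_cap Sm (Lline F1 F2 m.+1).
  rewrite capz mxrank0 addn0 Lrank ?md // in H.
  by rewrite H (eqmxP eqm) flag_rank // ?(ltnW md) // addn1.
have sub2 : (Sm + Lline F1 F2 m.+1 <= F2 m.+1)%MS.
  rewrite addsmx_sub L_sub2 andbT.
  apply: submx_trans sub1 _; apply: flag_mono => //; by rewrite leqnSn.
rewrite -(mxrank_leqif_sup sub2) rk flag_rank //.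
Qed.

End FlagStruct.

Section SStruct.
Variable R : realType.
Local Notation C := R[i].
Variable d : nat.
Variables (F1 F2 : flag R d).
Hypothesis isF1 : is_flag F1.
Hypothesis isF2 : is_flag F2.
Hypothesis tr12 : transverse F1 F2.

Definition Smx : 'M[C]_d := \matrix_(i < d) nz_row (Lline F1 F2 i.+1).

Lemma Lrank' (i : 'I_d) : \rank (Lline F1 F2 i.+1) = 1%N.
Proof. by apply: Lrank => //; have := ltn_ord i; lia. Qed.

Lemma rowS_sub (i : 'I_d) : (row i Smx <= Lline F1 F2 i.+1)%MS.
Proof. by rewrite rowK nz_row_sub. Qed.

Lemma rowS_neq0 (i : 'I_d) : row i Smx != 0.
Proof.
rewrite rowK nz_row_eq0 -mxrank_eq0 Lrank' //.
Qed.

Lemma L_rowS (i : 'I_d) : (Lline F1 F2 i.+1 <= row i Smx)%MS.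
Proof.
rewrite -(mxrank_leqif_sup (rowS_sub i)) Lrank' // rank_rV rowS_neq0 //.
Qed.

Lemma row_pidS m (j : 'I_d) : (j < m)%N -> row j ((pid_mx m : 'M[C]_d) *m Smx) = row j Smx.
Proof.
move=> jm; rewrite row_mul; have -> : row j (pid_mx m : 'M[C]_d) = row j 1%:M.
  by apply/rowP => l; rewrite !mxE jm andbT.
by rewrite -row_mul mul1mx.
Qed.

Lemma F2_pid m : (m <= d)%N -> (F2 m <= (pid_mx m : 'M[C]_d) *m Smx)%MS.
Proof.
move=> md; apply: submx_trans (F2sum isF1 isF2 tr12 md) _.
apply/sumsmx_subP => i _.
have id : (i < d)%N by apply: leq_trans (ltn_ord i) md.
apply: submx_trans (L_rowS (Ordinal id)) _.
rewrite -(@row_pidS m (Ordinal id)); [exact: row_sub | exact: ltn_ord i].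
Qed.

Lemma Smx_unit : Smx \in unitmx.
Proof.
rewrite -row_full_unit -sub1mx.
have : row_full (F2 d) by rewrite /row_full flag_rank.
rewrite -sub1mx => H; apply: submx_trans H _.
by rewrite -[X in (_ <= X)%MS]mul1mx -(pid_mx_1 _ d); apply: F2_pid.
Qed.

Lemma rowJS k (r : 'I_k) (j : 'I_d) : (k <= d)%N -> (j = d - k + r :> nat)%N ->
  row r (Jm R d k *m Smx) = row j Smx.
Proof.
move=> kd jE; rewrite row_mul; have -> : row r (Jm R d k) = row j 1%:M.
  by apply/rowP => l; rewrite !mxE /= -jE eq_sym.
by rewrite -row_mul mul1mx.
Qed.

Lemma A0_F1 k : (k <= d)%N -> (Jm R d k *m Smx == F1 k)%MS.
Proof.
move=> kd.
have sub : (Jm R d k *m Smx <= F1 k)%MS.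
  apply/row_subP => r.
  have jd : (d - k + r < d)%N by have := ltn_ord r; lia.
  rewrite (rowJS (j := Ordinal jd)) //.
  apply: submx_trans (rowS_sub _) _; apply: submx_trans (L_sub1 _ _ _) _.
  apply: flag_mono => //=; have := ltn_ord r; lia.
rewrite -(mxrank_leqif_eq sub) flag_rank //.
have := rowfree_A0 Smx_unit kd; rewrite /row_free => /eqP ->.
by [].
Qed.

Lemma eig_rowS (B : 'M[C]_d) (mu : nat -> C) :
  (forall i, (1 <= i <= d)%N -> eigval_on B (Lline F1 F2 i) (mu i)) ->
  forall i : 'I_d, row i Smx *m B^T = mu i.+1 *: row i Smx.
Proof.
move=> H i; apply: H; first by have := ltn_ord i; lia.
exact: rowS_sub.
Qed.

Lemma eig_neq0 (B : 'M[C]_d) (mu : nat -> C) :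
  (forall i, (1 <= i <= d)%N -> eigval_on B (Lline F1 F2 i) (mu i)) ->
  B \in unitmx -> forall i : 'I_d, mu i.+1 != 0.
Proof.
move=> H uB i; apply/eqP => m0.
have := eig_rowS H i; rewrite m0 scale0r => /eqP.
rewrite mulmx_free_eq0 ?row_free_unit ?unitmx_tr //.
by rewrite (negPf (rowS_neq0 i)).
Qed.

Lemma eig_inv_rowS (B : 'M[C]_d) (mu : nat -> C) :
  (forall i, (1 <= i <= d)%N -> eigval_on B (Lline F1 F2 i) (mu i)) ->
  B \in unitmx -> forall i : 'I_d, row i Smx *m (invmx B)^T = (mu i.+1)^-1 *: row i Smx.
Proof.
move=> H uB i.
have uBt : B^T \in unitmx by rewrite unitmx_tr.
have e := eig_rowS H i.
have nz := eig_neq0 H uB i.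
rewrite trmx_inv.
have Hv : mu i.+1 *: (row i Smx *m invmx B^T) = row i Smx.
  by rewrite scalemxAl -e mulmxK.
by rewrite -[in RHS]Hv scalerA mulVf // scale1r.
Qed.

End SStruct.

Section Chart.
Variable R : realType.
Local Notation C := R[i].
Variable d : nat.
Variables (F1 F2 F3 : flag R d).
Hypothesis isF1 : is_flag F1.
Hypothesis isF2 : is_flag F2.
Hypothesis isF3 : is_flag F3.
Hypothesis tr12 : transverse F1 F2.
Hypothesis tr23 : transverse F2 F3.

Local Notation S := (Smx F1 F2).

Lemma chart_exists k : (k <= d)%N -> exists X : 'M[C]_(k, d),
  suppY X /\ ((X + Jm R d k) *m S == F3 k)%MS.
Proof.
move=> kd.
have full : row_full (F2 (d - k)%N + F3 k)%MS.
  by have := tr23 (ssrnat.leq_subr k d); rewrite subKn.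
have : (Jm R d k *m S <= F2 (d - k)%N + F3 k)%MS.
  by apply: submx_trans (submx1 _) _; rewrite sub1mx.
case/sub_addsmxP => [[u1 u2] /= He].
have : (u1 *m F2 (d - k)%N <= (pid_mx (d - k) : 'M[C]_d) *m S)%MS.
  exact: submx_trans (submxMl _ _) (F2_pid isF1 isF2 tr12 (ssrnat.leq_subr k d)).
case/submxP => V HV.
set X := - (V *m (pid_mx (d - k) : 'M[C]_d)).
have sX : suppY X.
  move=> r j hj; rewrite /X !mxE big1 ?oppr0 // => l _; rewrite !mxE.
  have -> : ((l == j :> nat) && (l < d - k)%N) = false.
    by apply/negbTE; apply/negP => /andP [/eqP lj]; rewrite lj ltnNge hj.
  by rewrite mulr0.
exists X; split => //.
have eX : (X + Jm R d k) *m S = u2 *m F3 k.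
  by rewrite mulmxDl He /X mulNmx -mulmxA -HV addKr.
have sub : ((X + Jm R d k) *m S <= F3 k)%MS by rewrite eX submxMl.
rewrite -(mxrank_leqif_eq sub) flag_rank //.
have := rowfree_AY (Smx_unit isF1 isF2 tr12) kd sX; rewrite /row_free => /eqP ->.
by [].
Qed.

Lemma sigma'E i : (\sum_(1 <= j < d.+1 | j != i) Lline F1 F2 j)%MS =
  (\sum_(j < d | j.+1 != i) Lline F1 F2 j.+1)%MS.
Proof. by rewrite big_add1 /= big_mkord. Qed.

Lemma Lcap0 i : (1 <= i <= d)%N ->
  (Lline F1 F2 i :&: \sum_(1 <= j < d.+1 | j != i) Lline F1 F2 j)%MS = 0.
Proof.
move=> /andP [i1 id]; rewrite sigma'E.
set Sg := (\sum_(j < d | j.+1 != i) Lline F1 F2 j.+1)%MS.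
have i0d : (i.-1 < d)%N by lia.
set i0 : 'I_d := Ordinal i0d.
have rS : (\rank Sg <= d.-1)%N.
  apply: leq_trans (rank_sum_le _ _ _) _.
  rewrite (eq_bigr (fun _ => 1%N)); last by move=> j _; apply: Lrank'.
  have H : (\sum_(j < d) 1 = \sum_(j < d | j.+1 != i) 1 + \sum_(j < d | ~~ (j.+1 != i)) 1)%N.
    exact: bigID.
  rewrite big_const_ord iter_addn_0 mul1n in H.
  have H2 : (1 <= \sum_(j < d | ~~ (j.+1 != i)) 1)%N.
    rewrite (bigD1 i0) /=; last by rewrite negbK; apply/eqP; lia.
    by rewrite leq_addr.
  set A := (\sum_(j < d | j.+1 != i) 1)%N in H *.
  set B := (\sum_(j < d | ~~ (j.+1 != i)) 1)%N in H H2 *.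
  lia.
have full : \rank (Lline F1 F2 i + Sg)%MS = d.
  apply/eqP; rewrite eqn_leq rank_leq_col /=.
  rewrite -{1}(flag_rank isF2 (leqnn d)); apply: mxrankS.
  apply: submx_trans (F2sum isF1 isF2 tr12 (leqnn d)) _.
  apply/sumsmx_subP => j _; case: (eqVneq j.+1 i) => hj.
    by rewrite hj addsmxSl.
  apply: submx_trans (addsmxSr _ _); exact: (sumsmx_sup j).
have H := mxrank_sum_cap (Lline F1 F2 i) Sg.
rewrite full Lrank ?i1 // in H.
apply/eqP; rewrite -mxrank_eq0; apply/eqP; lia.
Qed.

End Chart.

Section Star.
Variable R : realType.
Local Notation C := R[i].
Variable d : nat.
Variables (F1 F2 F3 : flag R d).
Hypothesis isF1 : is_flag F1.
Hypothesis isF2 : is_flag F2.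
Hypothesis isF3 : is_flag F3.
Hypothesis tr12 : transverse F1 F2.
Hypothesis tr23 : transverse F2 F3.

Local Notation S := (Smx F1 F2).

Lemma star_nz k (X : 'M[C]_(k, d)) (r0 : 'I_k) (j0 : 'I_d) :
  (0 < k < d)%N -> suppY X -> ((X + Jm R d k) *m S == F3 k)%MS ->
  ((F2 (d - k)%N.+1 :&: F3 k) *m Lproj F1 F2 (d - k) == Lline F1 F2 (d - k))%MS ->
  r0 = 0%N :> nat -> j0 = (d - k).-1 :> nat -> X r0 j0 != 0.
Proof.
move=> /andP [k0 kd] sX HX Hs r00 j0E.
apply/negP => /eqP X0.
set i := (d - k)%N in Hs.
set M := (F2 i.+1 :&: F3 k)%MS in Hs.
have uS := Smx_unit isF1 isF2 tr12.
have fS : row_free S by rewrite row_free_unit.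
have HX2 : (F3 k <= (X + Jm R d k) *m S)%MS by case/andP: HX.
have /submxP [Cm HC] : (M <= (X + Jm R d k) *m S)%MS.
  exact: submx_trans (capmxSr _ _) HX2.
have i1d : (i.+1 <= d)%N by rewrite /i; lia.
have /submxP [Dm HD] : (M <= (pid_mx i.+1 : 'M[C]_d) *m S)%MS.
  exact: submx_trans (capmxSl _ _) (F2_pid isF1 isF2 tr12 i1d).
have HQ : Cm *m (X + Jm R d k) = Dm *m (pid_mx i.+1 : 'M[C]_d).
  by apply: (row_free_inj fS); rewrite -!mulmxA -HC -HD.
have C1 : forall l (r : 'I_k), (0 < r)%N -> Cm l r = 0.
  move=> l r r0'.
  have jr : (d - k + r < d)%N by have := ltn_ord r; lia.
  have := congr1 (fun A : 'M[C]_(_, d) => A l (Ordinal jr)) HQ; rewrite !mxE.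
  rewrite [in RHS]big1; last first.
    move=> l' _; rewrite !mxE.
    have -> : ((l' == Ordinal jr :> nat) && (l' < i.+1)%N) = false.
      by apply/negbTE; apply/negP => /andP [/eqP /= ->]; rewrite /i; lia.
    by rewrite mulr0.
  rewrite (bigD1 r) //= big1 ?addr0.
    by rewrite !mxE sX /= ?leq_addr // eqxx add0r mulr1.
  move=> l' lr; rewrite !mxE sX /= ?leq_addr // add0r.
  by rewrite eqn_add2l (inj_eq val_inj) eq_sym (negPf lr) mulr0.
have C2 : forall l, (Cm *m (X + Jm R d k)) l j0 = 0.
  move=> l; rewrite mxE big1 // => r' _; rewrite !mxE.
  have -> : (j0 == (d - k + r')%N :> nat) = false.
    by apply/negbTE; rewrite j0E; lia.
  rewrite addr0.
  case: (posnP r') => hr.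
    have -> : r' = r0 by apply: val_inj; rewrite /= hr r00.
    by rewrite X0 mulr0.
  by rewrite C1 // mul0r.
have HM : M = (Cm *m (X + Jm R d k)) *m S by rewrite HC mulmxA.
have subM : (M <= \sum_(1 <= j < d.+1 | j != i) Lline F1 F2 j)%MS.
  rewrite HM sigma'E; apply/row_subP => l; rewrite row_mul mulmx_sum_row.
  apply: summx_sub => j _.
  case: (eqVneq j j0) => [->|hj].
    by rewrite mxE C2 scale0r sub0mx.
  apply: scalemx_sub; apply: submx_trans (rowS_sub _ _ j) _.
  apply: (sumsmx_sup j) => //.
  move: hj; rewrite -(inj_eq val_inj) /= j0E /i => hj.
  by apply/eqP => hj'; move: hj; rewrite -hj'; lia.
have M0 : M *m Lproj F1 F2 i = 0.
  by rewrite /Lproj proj_mx_0 // Lcap0 // /i; lia.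
move: Hs; rewrite M0 => /andP [_]; rewrite submx0 -mxrank_eq0 Lrank //.
by rewrite /i; lia.
Qed.

End Star.

Definition Ych (R : realType) d k (X : 'M[R[i]]_(k, d)) (mu : nat -> R[i]) : 'M[R[i]]_(k, d) :=
  \matrix_(r, j) (X r j * mu (d - k + r).+1 / mu j.+1).

Section ChartB.
Variable R : realType.
Local Notation C := R[i].
Variable d : nat.
Variables (F1 F2 F3 : flag R d).
Hypothesis isF1 : is_flag F1.
Hypothesis isF2 : is_flag F2.
Hypothesis isF3 : is_flag F3.
Hypothesis tr12 : transverse F1 F2.
Hypothesis tr23 : transverse F2 F3.
Variables (B : 'M[C]_d) (mu : nat -> C).
Hypothesis uB : B \in unitmx.
Hypothesis heig : forall i, (1 <= i <= d)%N -> eigval_on B (Lline F1 F2 i) (mu i).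

Local Notation S := (Smx F1 F2).

Lemma Ych_supp k (X : 'M[C]_(k, d)) : suppY X -> suppY (Ych X mu).
Proof. by move=> sX r j hj; rewrite mxE sX // !mul0r. Qed.

Lemma S_Binv : S *m (invmx B)^T = diag_mx (\row_j (mu j.+1)^-1) *m S.
Proof.
apply/row_matrixP => i; rewrite row_mul (eig_inv_rowS isF1 isF2 tr12 heig uB).
by rewrite mul_diag_mx; apply/rowP => j; rewrite !mxE.
Qed.

Lemma diag_full n (u : 'rV[C]_n) : (forall j, u 0 j != 0) -> row_full (diag_mx u).
Proof.
move=> nz; apply/row_fullP; exists (diag_mx (\row_j (u 0 j)^-1)).
rewrite mulmx_diag; apply/matrixP => i j; rewrite !mxE.
by case: eqVneq => [->|]; rewrite ?mulVf ?mulr0n ?mulr1n.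
Qed.

Lemma chart_B k (X : 'M[C]_(k, d)) : (k <= d)%N -> suppY X ->
  ((X + Jm R d k) *m S == F3 k)%MS ->
  (act (invmx B) (F3 k) == (Ych X mu + Jm R d k) *m S)%MS.
Proof.
move=> kd sX HX.
have nz := eig_neq0 isF1 isF2 tr12 heig uB.
set u : 'rV[C]_k := \row_(r < k) mu (d - k + r).+1.
set w : 'rV[C]_d := \row_(j < d) (mu j.+1)^-1.
have e1 : Ych X mu + Jm R d k = diag_mx u *m ((X + Jm R d k) *m diag_mx w).
  rewrite mul_mx_diag mul_diag_mx; apply/matrixP => r j; rewrite !mxE.
  case: (eqVneq (j : nat) (d - k + r)%N) => hj.
    rewrite sX ?hj ?leq_addr // mul0r mul0r add0r /= mul1r mulfV //.
    have rd : (d - k + r < d)%N by have := ltn_ord r; lia.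
    exact: (nz (Ordinal rd)).
  by rewrite /= mulr0n !addr0 mulrCA mulrA.
have fu : row_full (diag_mx u).
  apply: diag_full => r; rewrite mxE.
  have rd : (d - k + r < d)%N by have := ltn_ord r; lia.
  exact: (nz (Ordinal rd)).
have e2 : (Ych X mu + Jm R d k) *m S = diag_mx u *m (((X + Jm R d k) *m S) *m (invmx B)^T).
  by rewrite e1 -!mulmxA S_Binv.
rewrite e2 /act; apply/eqmxP.
apply: eqmx_trans (eqmxMr _ (eqmx_sym (eqmxP HX))) (eqmx_sym (eqmxMfull _ fu)).
Qed.

End ChartB.

Section Ratio.
Variable R : realType.
Local Notation C := R[i].
Variable d : nat.
Variable mu : nat -> C.

Lemma max_ratio_ge0 : 0 <= max_ratio d mu.
Proof. exact: bigmax_ge_id. Qed.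

Lemma ratio_le_max t : (1 <= t < d)%N -> cabs (mu t.+1 / mu t) <= max_ratio d mu.
Proof.
move=> ht; rewrite /max_ratio.
have := @le_bigmax_seq _ R nat (index_iota 1 d) 0 t xpredT (fun i => cabs (mu i.+1 / mu i)).
move=> H; apply: H => //.
by rewrite mem_index_iota.
Qed.

Hypothesis nz : forall t, (1 <= t <= d)%N -> mu t != 0.

Lemma tele b n : max_ratio d mu <= 1 -> (1 <= b)%N -> (b + n.+1 <= d)%N ->
  cabs (mu (b + n.+1) / mu b) <= max_ratio d mu.
Proof.
move=> M1 b1; elim: n => [|n IH] hbn.
  by rewrite addn1; apply: ratio_le_max; lia.
have e : mu (b + n.+2) / mu b = (mu (b + n.+1).+1 / mu (b + n.+1)) * (mu (b + n.+1) / mu b).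
  rewrite mulrA -[X in _ = X * _]mulrA mulVf ?mulr1 ?addnS //.
  by apply: nz; lia.
rewrite e cabsM.
have h1 : cabs (mu (b + n.+1).+1 / mu (b + n.+1)) <= max_ratio d mu by apply: ratio_le_max; lia.
have h2 : cabs (mu (b + n.+1) / mu b) <= max_ratio d mu by apply: IH; lia.
have M0 := max_ratio_ge0.
apply: (@le_trans _ _ (max_ratio d mu * max_ratio d mu)).
  by apply: ler_pM => //; apply: cabs_ge0.
rewrite -[X in _ <= X]mulr1; apply: ler_wpM2l => //; apply: max_ratio_ge0.
Qed.

Lemma n1_Ych_le k (X : 'M[C]_(k, d)) : (k <= d)%N -> suppY X -> max_ratio d mu <= 1 ->
  n1 (Ych X mu) <= n1 X * max_ratio d mu.
Proof.
move=> kd sX M1; rewrite /n1 mulr_suml; apply: ler_sum => r _.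
rewrite mulr_suml; apply: ler_sum => j _.
case: (ltnP j (d - k)) => hj.
  2: by rewrite mxE sX // !mul0r cabs0 mul0r.
rewrite mxE -mulrA cabsM; apply: ler_wpM2l; first exact: cabs_ge0.
have e : ((d - k + r).+1 = j.+1 + (d - k + r - j.+1).+1)%N by lia.
rewrite e; apply: tele => //; have := ltn_ord r; lia.
Qed.

End Ratio.

Section Assembly.
Variable R : realType.
Local Notation C := R[i].
Variable d : nat.

Lemma frob0 : frob (0 : 'M[C]_d) = 0.
Proof.
rewrite /frob big1 ?sqrtr0 // => i _; rewrite big1 // => j _.
by rewrite mxE cabs0 expr0n.
Qed.

Lemma oproj_eq (U V : 'M[C]_d) : (U == V)%MS -> oproj U = oproj V.
Proof.
move=> /eqmxP H; rewrite /oproj -!/(fproj (row_base _)).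
apply: fproj_eqmx; try exact: row_base_free.
apply/eqmxP; apply: eqmx_trans (eq_row_base U) _.
apply: eqmx_trans H (eqmx_sym (eq_row_base V)).
Qed.

Lemma flag0 (F : flag R d) : is_flag F -> F 0%N = 0.
Proof. by move=> h; apply/eqP; rewrite -mxrank_eq0 flag_rank. Qed.

Variables (F1 F2 F3 : flag R d).
Hypothesis isF1 : is_flag F1.
Hypothesis isF2 : is_flag F2.
Hypothesis isF3 : is_flag F3.
Hypothesis hstar : property_star F1 F2 F3.

Let tr12 : transverse F1 F2 := hstar.1.
Let tr23 : transverse F2 F3 := hstar.2.1.

Local Notation S := (Smx F1 F2).

Lemma chart_ex' k : exists X : 'M[C]_(k, d),
  (k <= d)%N -> suppY X /\ ((X + Jm R d k) *m S == F3 k)%MS.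
Proof.
case: (leqP k d) => kd.
  by have [X HX] := chart_exists isF1 isF2 isF3 tr12 tr23 kd; exists X.
by exists 0 => h; lia.
Qed.

Definition Xc k : 'M[C]_(k, d) := proj1_sig (cid (chart_ex' k)).

Lemma Xc_spec k : (k <= d)%N -> suppY (Xc k) /\ ((Xc k + Jm R d k) *m S == F3 k)%MS.
Proof. exact: (proj2_sig (cid (chart_ex' k))). Qed.

Section PerB.
Variables (B : 'M[C]_d) (mu : nat -> C).
Hypothesis hB : in_Stab F1 F2 B.
Hypothesis he : forall i, (1 <= i <= d)%N -> eigval_on B (Lline F1 F2 i) (mu i).

Lemma uB : B \in unitmx.
Proof. by rewrite unitmxE (proj1 hB) unitr1. Qed.

Definition Tk j := frob (oproj (act (invmx B) (F3 j)) - oproj (F1 j)).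

Lemma distF_E : distF (act_flag (invmx B) F3) F1 = \sum_(j < d.+1) Tk j.
Proof. by []. Qed.

Lemma Tk_ge0 j : 0 <= Tk j.
Proof. exact: frob_ge0. Qed.

Lemma Tk_mid k : (0 < k < d)%N ->
  Tk k = frob (fproj ((Ych (Xc k) mu + Jm R d k) *m S) - P0 k S).
Proof.
move=> /andP [k0 kd]; have kd' := ltnW kd.
have [sX HX] := Xc_spec kd'.
have uS := Smx_unit isF1 isF2 tr12.
have e1 : oproj (F1 k) = P0 k S.
  apply: oproj_fproj; last exact: A0_F1.
  by have := rowfree_AY uS kd' (@suppY0 R d k); rewrite add0r.
have e2 : oproj (act (invmx B) (F3 k)) = fproj ((Ych (Xc k) mu + Jm R d k) *m S).
  have := rowfree_AY uS kd' (Ych_supp mu sX). move=> H. apply: oproj_fproj; first exact: H.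
  apply/eqmxP; apply: eqmx_sym; apply/eqmxP.
  exact: (chart_B isF1 isF2 tr12 uB he kd' sX HX).
by rewrite /Tk e1 e2.
Qed.

Lemma Tk_0 : Tk 0 = 0.
Proof. by rewrite /Tk (flag0 isF3) (flag0 isF1) /act mul0mx subrr frob0. Qed.

Lemma Tk_d : Tk d = 0.
Proof.
rewrite /Tk (@oproj_eq _ (F1 d)) ?subrr ?frob0 //.
have f1 : row_full (F1 d) by rewrite /row_full flag_rank.
have f3 : row_full (act (invmx B) (F3 d)).
  rewrite /row_full /act mxrankMfree ?flag_rank //.
  by rewrite row_free_unit unitmx_tr unitmx_inv uB.
by apply/andP; split; apply: submx_full.
Qed.

Lemma nzmu t : (1 <= t <= d)%N -> mu t != 0.
Proof.
move=> ht; have td : (t.-1 < d)%N by lia.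
have := eig_neq0 isF1 isF2 tr12 he uB (Ordinal td).
by rewrite /= prednK //; lia.
Qed.

End PerB.

End Assembly.

Section Bounds.
Variable R : realType.
Local Notation C := R[i].
Variable d : nat.
Variables (F1 F2 F3 : flag R d).
Hypothesis isF1 : is_flag F1.
Hypothesis isF2 : is_flag F2.
Hypothesis isF3 : is_flag F3.
Hypothesis hstar : property_star F1 F2 F3.

Let tr12 : transverse F1 F2 := hstar.1.
Let tr23 : transverse F2 F3 := hstar.2.1.
Local Notation S := (Smx F1 F2).
Local Notation X := (Xc isF1 isF2 isF3 hstar).

Lemma upper_pw : exists K eps : R, 0 < K /\ 0 < eps /\
  forall (B : 'M[C]_d) (mu : nat -> C), in_Stab F1 F2 B ->
    (forall i, (1 <= i <= d)%N -> eigval_on B (Lline F1 F2 i) (mu i)) ->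
    max_ratio d mu <= eps ->
    distF (act_flag (invmx B) F3) F1 <= K * max_ratio d mu.
Proof.
have uS := Smx_unit isF1 isF2 tr12.
have ub' : forall k, exists ce : R * R, (k <= d)%N -> 0 < ce.1 /\ 0 < ce.2 /\
    forall Y, suppY Y -> n1 Y <= ce.2 ->
      n1 (fproj ((Y + Jm R d k) *m S) - P0 k S) <= ce.1 * n1 Y.
  move=> k; case: (leqP k d) => kd.
    have [c [e [c0 [e0 H]]]] := upper_bound uS kd.
    by exists (c, e) => _; split => //.
  by exists (1, 1) => h; lia.
pose ce k := proj1_sig (cid (ub' k)).
have ceP : forall k, (k <= d)%N -> 0 < (ce k).1 /\ 0 < (ce k).2 /\
    forall Y, suppY Y -> n1 Y <= (ce k).2 ->
      n1 (fproj ((Y + Jm R d k) *m S) - P0 k S) <= (ce k).1 * n1 Y.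
  by move=> k; exact: (proj2_sig (cid (ub' k))).
pose c k := (ce k).1 * (n1 (X k) + 1).
pose e k := (ce k).2 / (n1 (X k) + 1).
have c0 : forall k : 'I_d.+1, 0 <= c k.
  move=> k; have [h1 _] := ceP k (ltn_ord k).
  by apply: mulr_ge0; [lra | have := n1_ge0 (X k); lra].
exists (\sum_(k < d.+1) c k + 1).
exists (\big[Num.min/1]_(k < d.+1 | (0 < k < d)%N) e k).
have s0 : 0 <= \sum_(k < d.+1) c k by apply: sumr_ge0 => k _; exact: c0 k.
split; first lra.
split.
  apply: lt_bigmin => //= k hk.
  have [_ [h2 _]] := ceP k (ltn_ord k).
  by apply: divr_gt0 => //; have := n1_ge0 (X k); lra.
move=> B mu hB he hM.
set M := max_ratio d mu.
have M0 : 0 <= M by apply: max_ratio_ge0.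
have M1 : M <= 1 by apply: le_trans hM _; apply: bigmin_le_id.
rewrite distF_E.
apply: (@le_trans _ _ (\sum_(k < d.+1) c k * M)).
  apply: ler_sum => k _.
  case: (eqVneq (k : nat) 0%N) => [k0|kpos].
    by rewrite k0 (Tk_0 isF1 isF3); apply: mulr_ge0 => //; exact: (c0 ord0).
  case: (ltnP k d) => kd; last first.
    have kE : (k : nat) = d by have := ltn_ord k; lia.
    rewrite [X in Tk _ _ _ X]kE (Tk_d isF1 isF3 hB); apply: mulr_ge0 => //; exact: c0.
  have kk : (0 < k < d)%N by rewrite kd andbT lt0n.
  rewrite (Tk_mid isF1 isF2 isF3 hstar hB he kk).
  have [sXk _] := Xc_spec isF1 isF2 isF3 hstar (ltnW kd).
  have hY : n1 (Ych (X k) mu) <= n1 (X k) * M.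
    have nz := nzmu isF1 isF2 hstar hB he.
    have := @n1_Ych_le R d mu nz k (X k) (ltnW kd) sXk M1.
    by [].
  have hMe : M <= e k.
    apply: le_trans hM _; exact: (bigmin_le_cond _ (P := fun k : 'I_d.+1 => (0 < k < d)%N)).
  have [h1 [h2 h3]] := ceP k (ltnW kd).
  have nX0 := n1_ge0 (X k).
  have hY2 : n1 (Ych (X k) mu) <= (ce k).2.
    apply: le_trans hY _; apply: (@le_trans _ _ (n1 (X k) * e k)).
      exact: ler_wpM2l.
    rewrite /e mulrA ler_pdivrMr; last lra.
    nra.
  apply: le_trans (frob_le_n1 _) _; apply: le_trans (h3 _ (Ych_supp mu sXk) hY2) _.
  rewrite /c; apply: (@le_trans _ _ ((ce k).1 * (n1 (X k) * M))).
    by apply: ler_wpM2l => //; lra.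
  rewrite -mulrA; apply: ler_wpM2l; first lra.
  by rewrite mulrDl mul1r lerDl.
rewrite -mulr_suml; apply: ler_wpM2r => //; lra.
Qed.

End Bounds.

Definition ent (R : realType) k n (A : 'M[R[i]]_(k, n)) (r j : nat) : R[i] :=
  match insub r, insub j with Some r', Some j' => A r' j' | _, _ => 0 end.

Lemma entE (R : realType) k n (A : 'M[R[i]]_(k, n)) (r : 'I_k) (j : 'I_n) :
  ent A r j = A r j.
Proof. by rewrite /ent !valK. Qed.

Section LBounds.
Variable R : realType.
Local Notation C := R[i].
Variable d : nat.
Variables (F1 F2 F3 : flag R d).
Hypothesis isF1 : is_flag F1.
Hypothesis isF2 : is_flag F2.
Hypothesis isF3 : is_flag F3.
Hypothesis hstar : property_star F1 F2 F3.

Let tr12 : transverse F1 F2 := hstar.1.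
Let tr23 : transverse F2 F3 := hstar.2.1.
Local Notation S := (Smx F1 F2).
Local Notation X := (Xc isF1 isF2 isF3 hstar).

Lemma xpos k (hk : (0 < k < d)%N) : 0 < cabs (ent (X k) 0 (d - k).-1).
Proof.
case/andP: (hk) => k0 kd.
have j0d : ((d - k).-1 < d)%N by lia.
have := @entE R k d (X k) (Ordinal k0) (Ordinal j0d); rewrite /= => ->.
have [sX HX] := Xc_spec isF1 isF2 isF3 hstar (ltnW kd).
have i1 : (1 <= d - k < d)%N by lia.
have [Hs _] := hstar.2.2 (d - k)%N i1.
rewrite /= subKn ?(ltnW kd) // in Hs.
have nz := star_nz (r0 := Ordinal k0) (j0 := Ordinal j0d) isF1 isF2 tr12 hk sX HX Hs (erefl _) (erefl _).
rewrite lt_def cabs_ge0 andbT; apply/eqP => /cabs_eq0 h.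
by move: nz; rewrite h eqxx.
Qed.

Lemma lower_pw : exists K del : R, 0 < K /\ 0 < del /\
  forall (B : 'M[C]_d) (mu : nat -> C), in_Stab F1 F2 B ->
    (forall i, (1 <= i <= d)%N -> eigval_on B (Lline F1 F2 i) (mu i)) ->
    distF (act_flag (invmx B) F3) F1 <= del ->
    max_ratio d mu <= K * distF (act_flag (invmx B) F3) F1.
Proof.
have uS := Smx_unit isF1 isF2 tr12.
have lb' : forall k, exists ce : R * R, (k <= d)%N -> 0 < ce.1 /\ 0 < ce.2 /\
    forall Y, suppY Y -> n1 (fproj ((Y + Jm R d k) *m S) - P0 k S) <= ce.2 ->
      n1 Y <= ce.1 * n1 (fproj ((Y + Jm R d k) *m S) - P0 k S).
  move=> k; case: (leqP k d) => kd.
    have [c [e [c0 [e0 H]]]] := lower_bound uS kd.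
    by exists (c, e) => _; split => //.
  by exists (1, 1) => h; clear -h kd; lia.
pose ce k := proj1_sig (cid (lb' k)).
have ceP : forall k, (k <= d)%N -> 0 < (ce k).1 /\ 0 < (ce k).2 /\
    forall Y, suppY Y -> n1 (fproj ((Y + Jm R d k) *m S) - P0 k S) <= (ce k).2 ->
      n1 Y <= (ce k).1 * n1 (fproj ((Y + Jm R d k) *m S) - P0 k S).
  by move=> k; exact: (proj2_sig (cid (lb' k))).
pose dd : R := (d * d)%:R.
have dd0 : 0 <= dd by apply: ler0n.
pose x k := cabs (ent (X k) 0 (d - k).-1).
pose c k := (ce k).1 * dd / x k.
have c0 : forall k : 'I_d.+1, 0 <= c k.
  move=> k; have [h1 _] := ceP k (ltn_ord k).
  apply: divr_ge0; first by apply: mulr_ge0 => //; lra.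
  exact: cabs_ge0.
have s0 : 0 <= \sum_(k < d.+1) c k by apply: sumr_ge0 => k _; exact: c0 k.
exists (\sum_(k < d.+1) c k + 1).
exists (\big[Num.min/1]_(k < d.+1 | (0 < k < d)%N) ((ce k).2 / (dd + 1))).
split; first lra.
split.
  apply: lt_bigmin => //= k hk.
  have [_ [h2 _]] := ceP k (ltn_ord k).
  by apply: divr_gt0 => //; lra.
move=> B mu hB he hD.
set D := distF (act_flag (invmx B) F3) F1.
have D0 : 0 <= D by rewrite /D distF_E; apply: sumr_ge0 => j _; apply: Tk_ge0.
rewrite /max_ratio big_seq_cond; apply: bigmax_le; first by apply: mulr_ge0 => //; lra.
move=> i /andP [hi _]; rewrite mem_index_iota in hi.
set k := (d - i)%N.
have kk : (0 < k < d)%N by rewrite /k; clear -hi; lia.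
have kd : (k < d)%N by case/andP: kk.
have kd1 : (k < d.+1)%N by clear -kd; lia.
have k0 : (0 < k)%N by case/andP: kk.
have j0d : ((d - k).-1 < d)%N by rewrite /k; clear -hi; lia.
have ek1 : (d - k + 0)%N = i by rewrite /k; clear -hi; lia.
have ek2 : ((d - k).-1.+1)%N = i by rewrite /k; clear -hi; lia.
have TD : Tk F1 F3 B k <= D.
  rewrite /D distF_E; exact: (@sum_ge_term _ _ (fun j : 'I_d.+1 => Tk F1 F3 B j) (Ordinal kd1) (fun j => Tk_ge0 _ _ _ _)).
have [h1 [h2 h3]] := ceP k (ltnW kd).
have [sXk _] := Xc_spec isF1 isF2 isF3 hstar (ltnW kd).
set N := n1 (fproj ((Ych (X k) mu + Jm R d k) *m S) - P0 k S).
have hN : N <= dd * D.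
  apply: le_trans (n1_le_frob _) _; rewrite -/dd.
  rewrite -(Tk_mid isF1 isF2 isF3 hstar hB he kk); exact: ler_wpM2l.
have hDel : D <= (ce k).2 / (dd + 1).
  apply: le_trans hD _; exact: (bigmin_le_cond _ (P := fun k : 'I_d.+1 => (0 < k < d)%N) (j := Ordinal kd1)).
have hN2 : N <= (ce k).2.
  apply: le_trans hN _; apply: (@le_trans _ _ (dd * ((ce k).2 / (dd + 1)))).
    exact: ler_wpM2l.
  rewrite mulrA ler_pdivrMr; last lra.
  nra.
have hY := h3 _ (Ych_supp mu sXk) hN2.
have hx := xpos kk.
have eY : cabs (Ych (X k) mu (Ordinal k0) (Ordinal j0d)) = x k * cabs (mu i.+1 / mu i).
  rewrite mxE -mulrA cabsM /x (@entE R k d (X k) (Ordinal k0) (Ordinal j0d)) /=.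
  by rewrite ek1 ek2.
have hE := n1_entry (Ych (X k) mu) (Ordinal k0) (Ordinal j0d).
rewrite eY in hE.
have step : cabs (mu i.+1 / mu i) <= c k * D.
  rewrite /c mulrAC ler_pdivlMr //.
  rewrite mulrC; apply: le_trans hE _; apply: le_trans hY _.
  rewrite -mulrA; apply: ler_wpM2l; first lra.
  by rewrite -/N.
apply: le_trans step _; apply: ler_wpM2r => //.
apply: le_trans (@sum_ge_term _ _ (fun j : 'I_d.+1 => c j) (Ordinal kd1) c0) _.
lra.
Qed.

End LBounds.

Lemma distF_ge0 (R : realType) d (F G : flag R d) : 0 <= distF F G.
Proof. by apply: sumr_ge0 => j _; apply: frob_ge0. Qed.

Local Open Scope classical_set_scope.
Local Open Scope ring_scope.

Theorem mainTheorem13 (R : realType) (d : nat) (F1 F2 F3 : flag R d) :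
  is_flag F1 -> is_flag F2 -> is_flag F3 ->
  general_position F1 F2 F3 -> property_star F1 F2 F3 ->
  (forall (B : nat -> 'M[R[i]]_d) (mu : nat -> nat -> R[i]),
     (forall n, in_Stab F1 F2 (B n)) ->
     (forall n i, (1 <= i <= d)%N -> eigval_on (B n) (Lline F1 F2 i) (mu n i)) ->
     ((fun n => distF (act_flag (invmx (B n)) F3) F1) @ \oo --> (0 : R)) <->
     ((fun n => max_ratio d (mu n)) @ \oo --> (0 : R)))
  /\
  (exists K : R, 0 < K /\
   forall (B : nat -> 'M[R[i]]_d) (mu : nat -> nat -> R[i]),
     (forall n, in_Stab F1 F2 (B n)) ->
     (forall n i, (1 <= i <= d)%N -> eigval_on (B n) (Lline F1 F2 i) (mu n i)) ->
     ((fun n => distF (act_flag (invmx (B n)) F3) F1) @ \oo --> (0 : R)) ->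
     exists N : nat, forall n : nat, (N <= n)%N ->
       K^-1 * max_ratio d (mu n) <= distF (act_flag (invmx (B n)) F3) F1 /\
       distF (act_flag (invmx (B n)) F3) F1 <= K * max_ratio d (mu n)).
Proof.
move=> isF1 isF2 isF3 _ hstar.
have [Ku [eps [Ku0 [eps0 HU]]]] := upper_pw isF1 isF2 isF3 hstar.
have [Kl [del [Kl0 [del0 HL]]]] := lower_pw isF1 isF2 isF3 hstar.
have part1 : forall (B : nat -> 'M[R[i]]_d) (mu : nat -> nat -> R[i]),
     (forall n, in_Stab F1 F2 (B n)) ->
     (forall n i, (1 <= i <= d)%N -> eigval_on (B n) (Lline F1 F2 i) (mu n i)) ->
     ((fun n => distF (act_flag (invmx (B n)) F3) F1) @ \oo --> (0 : R)) <->
     ((fun n => max_ratio d (mu n)) @ \oo --> (0 : R)).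
  move=> B mu hB he; split => h.
    apply: (@squeeze_cvgr _ _ _ _ (fun=> 0) (fun n => Kl * distF (act_flag (invmx (B n)) F3) F1)).
    - have ev := cvgr_le _ h _ del0.
      near=> n; apply/andP; split; first exact: max_ratio_ge0.
      apply: HL => //; first exact: he.
      near: n; exact: ev.
    - exact: cvg_cst.
    - have H := cvgMl_tmp (a := Kl) h; rewrite mulr0 in H; exact: H.
  apply: (@squeeze_cvgr _ _ _ _ (fun=> 0) (fun n => Ku * max_ratio d (mu n))).
  - have ev := cvgr_le _ h _ eps0.
    near=> n; apply/andP; split; first exact: distF_ge0.
    apply: HU => //; first exact: he.
    near: n; exact: ev.
  - exact: cvg_cst.
  - have H := cvgMl_tmp (a := Ku) h; rewrite mulr0 in H; exact: H.
split => //.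
exists (Ku + Kl); split; first lra.
move=> B mu hB he hd.
have hm := (part1 B mu hB he).1 hd.
have evd := cvgr_le _ hd _ del0.
have evm := cvgr_le _ hm _ eps0.
have ev : \forall n \near \oo, distF (act_flag (invmx (B n)) F3) F1 <= del /\ max_ratio d (mu n) <= eps.
  near=> n; split; [near: n; exact: evd | near: n; exact: evm].
case: ev => N _ HN; exists N => n hn.
have [h1 h2] := HN n hn.
have D0 := distF_ge0 (act_flag (invmx (B n)) F3) F1.
have M0 := max_ratio_ge0 d (mu n).
have hl := HL (B n) (mu n) (hB n) (he n) h1.
have hu := HU (B n) (mu n) (hB n) (he n) h2.
split.
  rewrite ler_pdivrMl; last lra.
  apply: le_trans hl _; apply: ler_wpM2r => //; lra.
apply: le_trans hu _; apply: ler_wpM2r => //; lra.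
Unshelve. all: end_near.
Qed.
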